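(* For every integer $m\ge 1$, the number of admissible sequences of length $m-1$ equals the Catalan number $C_m=\frac{1}{m+1}\binom{2m}{m}$.
   Context: A finite sequence of integers $\mathbf a=(a_1,\dots,a_n)$ is admissible if it is strictly increasing and $2i-1\le a_i\le 2n$ for all $1\le i\le n$ (the empty sequence, $n=0$, is admissible). *)

(* Defs.v *)
From mathcomp Require Import all_boot.
Set Implicit Arguments. Unset Strict Implicit. Unset Printing Implicit Defensive.

(* A finite integer sequence a = (a_1,...,a_n) is admissible if it is strictly
   increasing and 2i-1 <= a_i <= 2n for all 1 <= i <= n.
   Here sequences are 0-indexed: entry nth 0 s i is a_(i+1), so the
   condition reads 2(i+1)-1 = 2i+1 <= a_(i+1) <= 2n.  All entries are then
   positive, so taking them in nat loses nothing. *)
Definition admissible (s : seq nat) : bool :=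
  sorted ltn s &&
  all (fun i => (2 * i + 1 <= nth 0 s i) && (nth 0 s i <= 2 * size s))
      (iota 0 (size s)).

(* Admissible sequences of length n, encoded as n-tuples with entries in
   {0,...,2n} (every admissible sequence has entries <= 2n, so this
   encoding is a bijection onto the admissible sequences of length n). *)
Definition num_admissible (n : nat) : nat :=
  #|[pred t : n.-tuple 'I_(2 * n).+1 | admissible (map val t)]|.

Definition catalan (m : nat) : nat := 'C(2 * m, m) %/ m.+1.

(* Main.v *)
Require Import Defs.
From mathcomp Require Import all_boot zify.

Definition adm (B : nat) (s : seq nat) : bool :=
  [&& sorted ltn s, all (fun i => 2 * i + 1 <= nth 0 s i) (iota 0 (size s))
   & all (fun x => x < B) s].

Lemma sorted_rcons_ltn (s : seq nat) x :
  sorted ltn (rcons s x) = sorted ltn s && all (fun y => y < x) s.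
Proof.
rewrite !(sorted_pairwise ltn_trans) -cats1 pairwise_cat allrel1r /=.
by rewrite andbT andbC.
Qed.

Lemma low_rcons (s : seq nat) x :
  all (fun i => 2 * i + 1 <= nth 0 (rcons s x) i) (iota 0 (size (rcons s x)))
  = all (fun i => 2 * i + 1 <= nth 0 s i) (iota 0 (size s)) && (2 * size s + 1 <= x).
Proof.
rewrite size_rcons -(addn1 (size s)) iotaD all_cat /= add0n nth_rcons ltnn eqxx andbT.
congr (_ && _); apply: eq_in_all => i; rewrite mem_iota add0n => /andP [_ hi].
by rewrite nth_rcons hi.
Qed.

Lemma adm_rcons B s x :
  adm B (rcons s x) = adm x s && (2 * size s + 1 <= x < B).
Proof.
rewrite /adm sorted_rcons_ltn low_rcons all_rcons.
case: (sorted ltn s) => //=; case: (all _ (iota _ _)) => //=;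
case hs: (all _ s) => /=; case: (2 * size s + 1 <= x) => /=;
rewrite ?andbF ?andbT //.
case hx: (x < B) => //=.
apply/allP => y /(allP hs) hy; exact: ltn_trans hy hx.
Qed.

Lemma adm0 B : adm B [::].
Proof. by []. Qed.

Fixpoint L (B n : nat) : seq (seq nat) :=
  match B with
  | 0 => if n is 0 then [:: [::]] else [::]
  | B'.+1 => match n with
             | 0 => [:: [::]]
             | k.+1 => L B' n ++ (if 2 * k + 1 <= B' then map (fun s => rcons s B') (L B' k) else [::])
             end
  end.

Lemma memL B n s : (s \in L B n) = (size s == n) && adm B s.
Proof.
elim: B n s => [|B IH] n s.
  case: s => [|y s] /=; first by case: n.
  by rewrite /adm /= !andbF; case: n.
case: n => [|k] /=.
  by case: s => [|y s].
rewrite mem_cat IH.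
case/lastP: s => [|s x].
  rewrite /=; case: (2 * k + 1 <= B) => //=.
  by apply/negbTE/mapP => -[t _] /(congr1 size); rewrite size_rcons.
have -> : (rcons s x \in (if 2 * k + 1 <= B then [seq rcons s0 B | s0 <- L B k] else [::]))
   = (2 * k + 1 <= B) && (rcons s x \in map (fun s0 => rcons s0 B) (L B k)).
  by case: (2 * k + 1 <= B).
have -> : (rcons s x \in map (fun s0 => rcons s0 B) (L B k)) = (x == B) && (s \in L B k).
  apply/mapP/andP => [[t ht /rcons_inj [-> ->]] | [/eqP -> hs]]; last by exists s.
  by [].
rewrite IH !adm_rcons size_rcons !eqSS.
case: (eqVneq x B) => [->|hxB] /=.
  rewrite ltnn !andbF /= ltnSn andbT.
  case: (eqVneq (size s) k) => [<-|] /=; last by rewrite andbF.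
  by rewrite andbC.
by rewrite andbF orbF ltnS (leq_eqVlt x B) (negbTE hxB).
Qed.

Lemma uniqL B n : uniq (L B n).
Proof.
elim: B n => [|B IH] [|k] //=.
rewrite cat_uniq IH /=; case: (2 * k + 1 <= B) => /=; last by [].
rewrite (map_inj_uniq (fun a b (h : rcons a B = rcons b B) => (congr1 fst (rcons_inj h)))) IH andbT.
apply/hasPn => _ /mapP [t _ ->].
by rewrite memL adm_rcons ltnn !andbF.
Qed.

Definition bb (n B : nat) := if n is k.+2 then 'C(B, k) else 0.

Lemma bbS k B : bb k.+1 B.+1 = bb k.+1 B + bb k B.
Proof.
case: k => [|[|i]]; first by [].
  by rewrite /bb !bin0.
by rewrite /bb binS addnC.
Qed.

Lemma adm_size B s k : adm B s -> size s = k.+1 -> 2 * k + 1 < B.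
Proof.
case/lastP: s => [//|s x]; rewrite adm_rcons size_rcons => /andP [_ /andP [h1 h2]] [<-].
exact: leq_ltn_trans h1 h2.
Qed.

Lemma LS B k : L B.+1 k.+1 = L B k.+1 ++ (if 2 * k + 1 <= B then map (fun s => rcons s B) (L B k) else [::]).
Proof. by []. Qed.

Lemma sizeL B n : 2 * n <= B + 2 -> size (L B.+1 n) + bb n B = 'C(B, n).
Proof.
elim: B n => [|B IH] n.
  by case: n => [|[|n]] //; lia.
case: n => [|k] hk; first by [].
rewrite LS size_cat.
case: ifP => h.
  rewrite size_map bbS binS.
  have e1 := IH k.+1 ltac:(lia).
  have e2 := IH k ltac:(lia).
  lia.
have -> : size (L B.+1 k.+1) = 0.
  case E: (L B.+1 k.+1) => [|s ss] //.
  have := mem_head s ss; rewrite -E memL => /andP [/eqP hs ha].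
  have := @adm_size _ _ _ ha hs; lia.
have hB : B.+1 = 2 * k by lia.
rewrite hB /=; case: k hk h hB => [|j] //= hk h hB.
rewrite -(bin_sub (n := (2 * j.+1)) (m := j)); last lia.
by congr 'C(_, _); lia.
Qed.

Lemma all_and (T : Type) (a b : pred T) (r : seq T) :
  all (fun i => a i && b i) r = all a r && all b r.
Proof. elim: r => //= x r ->; by case: (a x); case: (b x); case: (all a r). Qed.

Lemma admissibleE s : admissible s = adm (2 * size s).+1 s.
Proof.
rewrite /admissible /adm all_and.
have -> : all (fun i => nth 0 s i <= 2 * size s) (iota 0 (size s))
        = all (fun x => x < (2 * size s).+1) s.
  by rewrite -[X in _ = all _ X](mkseq_nth 0 s) /mkseq all_map.
by [].
Qed.

Lemma numL n : num_admissible n = size (L (2 * n).+1 n).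
Proof.
rewrite /num_admissible cardE.
set A := [pred t : n.-tuple 'I_(2 * n).+1 | admissible (map val t)].
rewrite -(size_map (fun t : n.-tuple 'I_(2 * n).+1 => map val (val t))).
apply: perm_size; apply: uniq_perm.
- rewrite map_inj_uniq ?enum_uniq //.
  move=> t1 t2 h; apply: val_inj; apply: (inj_map val_inj h).
- exact: uniqL.
move=> s; apply/mapP/idP.
  move=> [t]; rewrite mem_enum inE => ht ->.
  rewrite memL size_map size_tuple eqxx /=.
  by move: ht; rewrite admissibleE size_map size_tuple.
rewrite memL => /andP [/eqP hs ha].
have hs' : size (map (fun x => inord x : 'I_(2 * n).+1) s) == n by rewrite size_map hs.
have hv : map val (map (fun x => inord x : 'I_(2 * n).+1) s) = s.
  rewrite -map_comp -[RHS]map_id; apply/eq_in_map => x hx /=.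
  apply: inordK. move: ha => /and3P [_ _ /allP /(_ x hx)] //.
exists (Tuple hs'); last by rewrite /= hv.
by rewrite mem_enum inE /= hv admissibleE hs.
Qed.

Theorem mainTheorem6 (m : nat) : 1 <= m -> num_admissible m.-1 = catalan m.
Proof.
case: m => [//|n] _ /=.
rewrite numL /catalan.
have hS := @sizeL (2 * n) n ltac:(lia).
case: n hS => [|k] hS; first by rewrite /=.
set G := size _ in hS *.
set x := 'C(2 * k.+1, k.+1) in hS.
have hz : bb k.+1 (2 * k.+1) = 'C(2 * k.+1, k.+3).
  case: k {G x hS} => [|j]; first by rewrite bin_small.
  rewrite /bb -(bin_sub (n := 2 * j.+2) (m := j)); last lia.
  by congr 'C(_, _); lia.
rewrite hz in hS.
set y := 'C(2 * k.+1, k.+2).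
set z := 'C(2 * k.+1, k.+3) in hS.
have e1 : k.+2 * y = k.+1 * x.
  rewrite /y /x mul_bin_left; congr (_ * _); lia.
have e2 : k.+3 * z = k * y.
  rewrite /y /z mul_bin_left; congr (_ * _); lia.
have e3 : 'C(2 * k.+2, k.+2) = y + x + (x + y).
  rewrite (_ : 2 * k.+2 = (2 * k.+1).+2); last lia.
  rewrite binS binS binS.
  have -> : 'C((2 * k.+1), k) = y.
    rewrite /y -(bin_sub (n := 2 * k.+1) (m := k.+2)); last lia.
    by congr 'C(_, _); lia.
  by [].
have e4 : 'C(2 * k.+2, k.+2) = k.+3 * G.
  rewrite e3.
  have h5 : k.+3 * (G + z) = k.+3 * x by rewrite hS.
  nia.
by rewrite e4 mulKn.
Qed.
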